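(* Let $N\ge2$, $R>0$ and $u\in C(B_R,(0,\infty))$. Suppose there exists $M\in O(N)$ such that $u_M$ is axially symmetric with respect to the $x_N$-axis (i.e. for every $\alpha\in(0,R]$ and $h\in[-\alpha,\alpha]$, $u_M$ is constant on $\{x\in S^{N-1}_\alpha:x_N=h\}$) and, for every $\alpha\in(0,R]$, the function $\theta\mapsto u_M(0_{N-2},\alpha\cos\theta,\alpha\sin\theta)$ is nonincreasing on $[\pi/2,3\pi/2]$. Then $u$ is separable in $B_R$.
   Context: $B_R$ is the closed ball of radius $R$ centered at $0$ in $\mathbb{R}^N$; $S^{N-1}_\alpha$ is the sphere of radius $\alpha$ centered at $0$; $O(N)$ is the orthogonal group and $u_M(x):=u(M^{-1}x)$; $0_k$ is the zero vector of $\mathbb{R}^k$. For an open half-space $H$, $\sigma_H$ is the reflection across $\partial H$. A function $u:B_R\to\mathbb{R}$ is separable in $B_R$ if for every open half-space $H\subset\mathbb{R}^N$ with $0\in\partial H$, either $u(x)\ge u(\sigma_Hx)$ for all $x\in H\cap B_R$, or $u(x)\le u(\sigma_Hx)$ for all $x\in H\cap B_R$. *)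

(* Defs.v *)
From Stdlib Require Import Reals Lra Lia.
Open Scope R_scope.

(* Points of R^N are represented as functions nat -> R whose coordinates
   of index >= N vanish (coordinate i corresponds to x_{i+1}). *)
Definition point := nat -> R.

Definition inRN (N : nat) (x : point) : Prop :=
  forall i : nat, (N <= i)%nat -> x i = 0.

Fixpoint sumN (n : nat) (f : nat -> R) : R :=
  match n with
  | O => 0
  | S m => sumN m f + f m
  end.

Definition dot (N : nat) (x y : point) : R := sumN N (fun i => x i * y i).
Definition norm (N : nat) (x : point) : R := sqrt (dot N x x).
Definition vsub (x y : point) : point := fun i => x i - y i.

Definition in_ball (N : nat) (Rad : R) (x : point) : Prop :=
  inRN N x /\ norm N x <= Rad.
Definition in_sphere (N : nat) (alpha : R) (x : point) : Prop :=
  inRN N x /\ norm N x = alpha.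

Definition continuous_on_ball (N : nat) (Rad : R) (u : point -> R) : Prop :=
  forall x, in_ball N Rad x -> forall eps, 0 < eps ->
    exists delta, 0 < delta /\
      forall y, in_ball N Rad y -> norm N (vsub y x) < delta ->
        Rabs (u y - u x) < eps.

Definition orthogonal (N : nat) (M : nat -> nat -> R) : Prop :=
  forall i j, (i < N)%nat -> (j < N)%nat ->
    sumN N (fun k => M k i * M k j) = if Nat.eqb i j then 1 else 0.

(* M^{-1} x = M^T x for orthogonal M *)
Definition mat_inv_apply (N : nat) (M : nat -> nat -> R) (x : point) : point :=
  fun i => if Nat.ltb i N then sumN N (fun j => M j i * x j) else 0.

(* u_M(x) := u(M^{-1} x) *)
Definition rot (N : nat) (M : nat -> nat -> R) (u : point -> R) : point -> R :=
  fun x => u (mat_inv_apply N M x).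

Definition last2 (N : nat) (a b : R) : point :=
  fun i => if Nat.eqb i (N - 2) then a else if Nat.eqb i (N - 1) then b else 0.

(* reflection across the hyperplane nu^perp, nu a unit vector *)
Definition reflect (N : nat) (nu x : point) : point :=
  fun i => x i - 2 * dot N nu x * nu i.

(* Open half-spaces H with 0 in the boundary are exactly
   H = {x | nu . x > 0} with nu a unit vector of R^N. *)
Definition separable (N : nat) (Rad : R) (u : point -> R) : Prop :=
  forall nu : point, inRN N nu -> norm N nu = 1 ->
    (forall x, in_ball N Rad x -> dot N nu x > 0 -> u x >= u (reflect N nu x)) \/
    (forall x, in_ball N Rad x -> dot N nu x > 0 -> u x <= u (reflect N nu x)).

(* Main.v *)
Require Import Defs.
From Stdlib Require Import Reals Lra Lia FunctionalExtensionality.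
Open Scope R_scope.

Lemma sumN_ext_lt n f g : (forall i, (i < n)%nat -> f i = g i) -> sumN n f = sumN n g.
Proof. induction n; simpl; intros H; auto. rewrite IHn by (intros; apply H; lia). rewrite H by lia. auto. Qed.

Lemma sumN_add n f g : sumN n (fun i => f i + g i) = sumN n f + sumN n g.
Proof. induction n; simpl; [lra|]. rewrite IHn; lra. Qed.

Lemma sumN_scal n c f : sumN n (fun i => c * f i) = c * sumN n f.
Proof. induction n; simpl; [lra|]. rewrite IHn; lra. Qed.

Lemma sumN_zero n : sumN n (fun _ => 0) = 0.
Proof. induction n; simpl; lra. Qed.

Lemma sumN_swap n m f : sumN n (fun i => sumN m (fun j => f i j)) = sumN m (fun j => sumN n (fun i => f i j)).
Proof. induction n; simpl. symmetry; apply sumN_zero. rewrite IHn. rewrite <- sumN_add. reflexivity. Qed.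

Lemma sumN_delta n i f : (i < n)%nat -> sumN n (fun k => (if Nat.eqb i k then 1 else 0) * f k) = f i.
Proof.
  induction n; intros H; [lia|]. simpl.
  destruct (Nat.eq_dec i n) as [->|Hne].
  - rewrite Nat.eqb_refl. rewrite (sumN_ext_lt n _ (fun _ => 0)). rewrite sumN_zero; lra.
    intros k Hk. destruct (Nat.eqb_spec n k); [lia|lra].
  - rewrite IHn by lia. destruct (Nat.eqb_spec i n); [lia|lra].
Qed.

Lemma sumN_nonneg n f : (forall i, 0 <= f i) -> 0 <= sumN n f.
Proof. induction n; simpl; intros H; [lra|]. specialize (IHn H); specialize (H n); lra. Qed.

Lemma sumN_term n f i : (forall k, 0 <= f k) -> (i < n)%nat -> f i <= sumN n f.
Proof.
  induction n; intros H Hi; [lia|]. simpl.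
  destruct (Nat.eq_dec i n) as [->|]. pose proof (sumN_nonneg n f H); lra.
  specialize (IHn H ltac:(lia)). specialize (H n). lra.
Qed.

Lemma sumN_mul_r n f c : sumN n f * c = sumN n (fun i => f i * c).
Proof. induction n; simpl; [lra|]. rewrite <- IHn; lra. Qed.

Definition applyM (N : nat) (M : nat -> nat -> R) (x : point) : point :=
  fun i => if Nat.ltb i N then sumN N (fun j => M i j * x j) else 0.

Lemma inRN_applyM N M x : inRN N (applyM N M x).
Proof. intros i Hi. unfold applyM. destruct (Nat.ltb_spec i N); [lia|auto]. Qed.

Lemma inv_applyM N M x : orthogonal N M -> inRN N x -> mat_inv_apply N M (applyM N M x) = x.
Proof.
  intros HM Hx. extensionality i. unfold mat_inv_apply.
  destruct (Nat.ltb_spec i N) as [Hi|Hi]; [|symmetry; apply Hx; lia].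
  rewrite (sumN_ext_lt N _ (fun j => sumN N (fun k => M j i * M j k * x k))).
  2:{ intros j Hj. unfold applyM. destruct (Nat.ltb_spec j N); [|lia].
      rewrite <- sumN_scal. apply sumN_ext_lt; intros; ring. }
  rewrite sumN_swap.
  rewrite (sumN_ext_lt N _ (fun k => (if Nat.eqb i k then 1 else 0) * x k)).
  apply sumN_delta; auto.
  intros k Hk. rewrite <- HM by auto. rewrite sumN_mul_r. reflexivity.
Qed.

Lemma dot_applyM N M x : orthogonal N M -> inRN N x -> dot N (applyM N M x) (applyM N M x) = dot N x x.
Proof.
  intros HM Hx. unfold dot.
  rewrite (sumN_ext_lt N _ (fun i => sumN N (fun k => M i k * x k * applyM N M x i))).
  2:{ intros i Hi. unfold applyM at 1. destruct (Nat.ltb_spec i N); [|lia].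
      rewrite sumN_mul_r. reflexivity. }
  rewrite sumN_swap. apply sumN_ext_lt. intros k Hk.
  assert (E := f_equal (fun p => p k) (inv_applyM N M x HM Hx)). simpl in E.
  unfold mat_inv_apply in E. destruct (Nat.ltb_spec k N); [|lia].
  rewrite <- E at 2. rewrite <- sumN_scal. apply sumN_ext_lt; intros; ring.
Qed.

Lemma applyM_lin N M x v c i : (i < N)%nat ->
  applyM N M (fun j => x j - c * v j) i = applyM N M x i - c * applyM N M v i.
Proof.
  intros Hi. unfold applyM. destruct (Nat.ltb_spec i N); [|lia].
  rewrite <- sumN_scal. replace (sumN N (fun j => M i j * x j) - sumN N (fun j => c * (M i j * v j)))
    with (sumN N (fun j => M i j * x j) + (-1) * sumN N (fun j => c * (M i j * v j))) by ring.
  rewrite <- sumN_scal, <- sumN_add. apply sumN_ext_lt; intros; ring.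
Qed.

Lemma dot_refl_exp N x v c :
  dot N (fun i => x i - c * v i) (fun i => x i - c * v i)
  = dot N x x + (-2 * c) * dot N v x + (c * c) * dot N v v.
Proof.
  unfold dot. rewrite <- !sumN_scal, <- !sumN_add. apply sumN_ext_lt; intros; ring.
Qed.

Lemma inRN_sub N x v c : inRN N x -> inRN N v -> inRN N (fun i => x i - c * v i).
Proof. intros Hx Hv i Hi. rewrite Hx, Hv by auto. ring. Qed.

Lemma last2_sq N a b : (2 <= N)%nat -> dot N (last2 N a b) (last2 N a b) = a * a + b * b.
Proof.
  intros HN. destruct N as [|[|n]]; [lia|lia|]. unfold dot.
  change (sumN (S (S n)) ?f) with (sumN n f + f n + f (S n)).
  rewrite (sumN_ext_lt n _ (fun _ => 0)). rewrite sumN_zero. unfold last2.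
  replace (S (S n) - 2)%nat with n by lia. replace (S (S n) - 1)%nat with (S n) by lia.
  destruct (Nat.eqb_spec n n); [|lia]. destruct (Nat.eqb_spec (S n) n); [lia|]. destruct (Nat.eqb_spec (S n) (S n)); [|lia]. ring.
  intros i Hi. unfold last2.
  replace (S (S n) - 2)%nat with n by lia. replace (S (S n) - 1)%nat with (S n) by lia.
  destruct (Nat.eqb_spec i n); [lia|]. destruct (Nat.eqb_spec i (S n)); [lia|]. ring.
Qed.

Lemma inRN_last2 N a b : (2 <= N)%nat -> inRN N (last2 N a b).
Proof. intros HN i Hi. unfold last2. destruct (Nat.eqb_spec i (N-2)); [lia|]. destruct (Nat.eqb_spec i (N-1)); [lia|]. auto. Qed.

Lemma last2_last N a b : (2 <= N)%nat -> last2 N a b (N-1)%nat = b.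
Proof. intros HN. unfold last2. destruct (Nat.eqb_spec (N-1) (N-2)); [lia|]. rewrite Nat.eqb_refl. auto. Qed.

Lemma dot_nonneg N x : 0 <= dot N x x.
Proof. apply sumN_nonneg. intros; nra. Qed.

Lemma norm_sq N x : norm N x * norm N x = dot N x x.
Proof. unfold norm. apply sqrt_sqrt, dot_nonneg. Qed.

Lemma coord_bound N x i : (i < N)%nat -> Rabs (x i) <= norm N x.
Proof.
  intros Hi. assert (H := sumN_term N (fun k => x k * x k) i ltac:(intros; nra) Hi).
  fold (dot N x x) in H. rewrite <- norm_sq in H.
  assert (0 <= norm N x) by (unfold norm; apply sqrt_pos).
  apply Rabs_le; split; nra.
Qed.

Lemma acos_mono a b : -1 <= a <= 1 -> -1 <= b <= 1 -> a <= b -> acos b <= acos a.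
Proof.
  intros Ha Hb Hab. destruct (Rle_lt_dec (acos b) (acos a)) as [|H]; auto.
  pose proof (acos_bound a); pose proof (acos_bound b).
  pose proof (cos_decreasing_1 (acos a) (acos b) ltac:(lra) ltac:(lra) ltac:(lra) ltac:(lra) H).
  rewrite !cos_acos in H2 by auto. lra.
Qed.

Section Mono.
Variables (N : nat) (Rad : R) (v : point -> R).
Hypothesis HN : (2 <= N)%nat.
Hypothesis Hax : forall alpha h, 0 < alpha <= Rad -> -alpha <= h <= alpha ->
        forall x y, in_sphere N alpha x -> in_sphere N alpha y ->
          x (N - 1)%nat = h -> y (N - 1)%nat = h -> v x = v y.
Hypothesis Hmon : forall alpha, 0 < alpha <= Rad ->
        forall t1 t2, PI / 2 <= t1 -> t1 <= t2 -> t2 <= 3 * PI / 2 ->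
          v (last2 N (alpha * cos t2) (alpha * sin t2))
          <= v (last2 N (alpha * cos t1) (alpha * sin t1)).

Definition tt (alpha h : R) := PI / 2 + acos (h / alpha).

Lemma to_last2 alpha a : 0 < alpha <= Rad -> in_sphere N alpha a ->
  v a = v (last2 N (alpha * cos (tt alpha (a (N-1)%nat))) (alpha * sin (tt alpha (a (N-1)%nat))))
  /\ -1 <= a (N-1)%nat / alpha <= 1.
Proof.
  intros Hal [Hin Hn].
  assert (Hb := coord_bound N a (N-1) ltac:(lia)). rewrite Hn in Hb.
  assert (Hb' : -alpha <= a (N-1)%nat <= alpha) by (revert Hb; unfold Rabs; destruct (Rcase_abs _); intros; lra).
  assert (Hs : -1 <= a (N-1)%nat / alpha <= 1).
  { split; [apply Rmult_le_reg_r with alpha|apply Rmult_le_reg_r with alpha]; try lra; unfold Rdiv; rewrite Rmult_assoc, Rinv_l, Rmult_1_r by lra; lra. }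
  split; auto.
  assert (Hsin : alpha * sin (tt alpha (a (N-1)%nat)) = a (N-1)%nat).
  { unfold tt. rewrite sin_plus, sin_PI2, cos_PI2, cos_acos by auto. field. lra. }
  eapply Hax; [exact Hal| exact Hb' | split; [exact Hin | exact Hn] | | reflexivity | ].
  - split. apply inRN_last2; auto. unfold norm. rewrite last2_sq by auto.
    set (t := tt alpha (a (N-1)%nat)).
    replace (alpha * cos t * (alpha * cos t) + alpha * sin t * (alpha * sin t)) with (alpha * alpha).
    apply sqrt_square; lra.
    pose proof (sin2_cos2 t). unfold Rsqr in H. nra.
  - rewrite last2_last by auto. auto.
Qed.

Lemma mono_sphere alpha a b : 0 < alpha <= Rad -> in_sphere N alpha a -> in_sphere N alpha b ->
  a (N-1)%nat <= b (N-1)%nat -> v a <= v b.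
Proof.
  intros Hal Ha Hb Hab.
  destruct (to_last2 alpha a Hal Ha) as [-> Hsa].
  destruct (to_last2 alpha b Hal Hb) as [-> Hsb].
  apply Hmon; auto; unfold tt; pose proof (acos_bound (a (N-1)%nat / alpha)); pose proof (acos_bound (b (N-1)%nat / alpha)).
  - lra.
  - apply Rplus_le_compat_l. apply acos_mono; auto. apply Rmult_le_compat_r; auto.
    left; apply Rinv_0_lt_compat; lra.
  - lra.
Qed.
End Mono.

Lemma norm_pos N nu x : dot N nu x > 0 -> 0 < norm N x.
Proof.
  intros Hd. pose proof (dot_nonneg N x). pose proof (norm_sq N x).
  assert (0 <= norm N x) by (unfold norm; apply sqrt_pos).
  destruct (Rle_lt_dec (norm N x) 0); [|auto]. exfalso.
  assert (Hz : dot N x x = 0) by nra.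
  assert (Hd0 : dot N nu x = 0).
  { unfold dot. rewrite (sumN_ext_lt N _ (fun _ => 0)). apply sumN_zero.
    intros i Hi. assert (Ht := sumN_term N (fun k => x k * x k) i ltac:(intros; nra) Hi).
    fold (dot N x x) in Ht. assert (x i = 0) by nra. rewrite H2; ring. }
  lra.
Qed.

Theorem theorem2p2 (N : nat) (Rad : R) (u : point -> R) :
  (2 <= N)%nat -> 0 < Rad ->
  continuous_on_ball N Rad u ->
  (forall x, in_ball N Rad x -> 0 < u x) ->
  (exists M : nat -> nat -> R,
     orthogonal N M /\
     (forall alpha h, 0 < alpha <= Rad -> -alpha <= h <= alpha ->
        forall x y, in_sphere N alpha x -> in_sphere N alpha y ->
          x (N - 1)%nat = h -> y (N - 1)%nat = h ->
          rot N M u x = rot N M u y) /\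
     (forall alpha, 0 < alpha <= Rad ->
        forall t1 t2, PI / 2 <= t1 -> t1 <= t2 -> t2 <= 3 * PI / 2 ->
          rot N M u (last2 N (alpha * cos t2) (alpha * sin t2))
          <= rot N M u (last2 N (alpha * cos t1) (alpha * sin t1)))) ->
  separable N Rad u.
Proof.
  intros HN HR _ _ [M [HM [Hax Hmon]]] nu Hnu Hn1.
  assert (Hnn : dot N nu nu = 1) by (rewrite <- norm_sq, Hn1; ring).
  assert (key : forall x, in_ball N Rad x -> dot N nu x > 0 ->
     u x = rot N M u (applyM N M x) /\ u (reflect N nu x) = rot N M u (applyM N M (reflect N nu x))
     /\ 0 < norm N x <= Rad
     /\ in_sphere N (norm N x) (applyM N M x) /\ in_sphere N (norm N x) (applyM N M (reflect N nu x))
     /\ applyM N M (reflect N nu x) (N-1)%nat = applyM N M x (N-1)%nat - 2 * dot N nu x * applyM N M nu (N-1)%nat).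
  { intros x [Hx Hxn] Hd.
    assert (Hr : inRN N (reflect N nu x)) by (apply inRN_sub; auto).
    unfold rot. rewrite !inv_applyM by auto.
    split; [auto|split; [auto|]].
    split. split; [eapply norm_pos; eauto|auto].
    split. split. apply inRN_applyM. unfold norm. rewrite dot_applyM by auto. reflexivity.
    split. split. apply inRN_applyM. unfold norm. rewrite dot_applyM by auto.
      unfold reflect. rewrite dot_refl_exp, Hnn. f_equal. ring.
    unfold reflect. apply applyM_lin. lia. }
  destruct (Rle_lt_dec 0 (applyM N M nu (N-1)%nat)) as [Hc|Hc]; [left|right]; intros x Hb Hd;
  destruct (key x Hb Hd) as (E1 & E2 & Hal & S1 & S2 & Eh); rewrite E1, E2.
  - apply Rle_ge. eapply mono_sphere; eauto. rewrite Eh. nra.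
  - eapply mono_sphere; eauto. rewrite Eh. nra.
Qed.
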